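(* Let $D=D_1\times\cdots\times D_s$ where each $D_i$ is a finite dihedral group with a cyclic subgroup $T_i$ of index $2$, and let $T=T_1\times\cdots\times T_s$ (so $|D:T|=2^s$). For any subgroup $L$ of $T$, the number of subgroups $H$ of $D$ with $H\cap T=L$ is at most $|D|^8\,2^{2s^2}$. *)

(* Defs.v *)
From mathcomp Require Import all_boot all_fingroup all_solvable.
Set Implicit Arguments. Unset Strict Implicit. Unset Printing Implicit Defensive.
Import GroupScope.
Local Open Scope group_scope.

(* This includes the degenerate dihedral groups of order 2 (T = 1) and 4
   (Klein four group, T of order 2). *)
Definition dihedral_with (gT : finGroupType) (D T : {set gT}) : Prop :=
  [/\ T \subset D, cyclic T, #|D : T| = 2 &
      exists2 x, x \in D :\: T & (x ^+ 2 = 1 /\ forall t, t \in T -> t ^ x = t^-1)].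

(* Main.v *)
Require Import Defs.
From mathcomp Require Import all_boot all_fingroup all_solvable.
From mathcomp Require Import zify.
Import GroupScope.

Section Helpers.
Set Implicit Arguments. Unset Strict Implicit. Unset Printing Implicit Defensive.
Local Open Scope group_scope.

Lemma card_bigcup_le (I U : finType) (A : {set I}) (F : I -> {set U}) :
  #|\bigcup_(i in A) F i| <= \sum_(i in A) #|F i|.
Proof.
elim/big_rec2: _ => [|i n X _ IH]; first by rewrite cards0.
by apply: (leq_trans (leq_card_setU _ _)); rewrite leq_add2l.
Qed.

Lemma dvd_lt2 d n : d %| n -> d < n -> 2 * d <= n.
Proof.
case/dvdnP=> q ->; case: q => [|[|q]]; nia.
Qed.

Lemma arith (a c w x : nat) : c <= a -> 0 < w -> 0 < x -> 0 < a ->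
  1 + c * (a * (w * x)) <= w * (x * (2 * (a * a))).
Proof. move=> ca w0 x0 a0; nia. Qed.


Lemma cent_of_dprod (gT : finGroupType) (s : nat) (Di : 'I_s -> {group gT}) (D : {group gT}) :
  \big[dprod/1]_(i < s) Di i = D -> forall i j, i != j -> Di i \subset 'C(Di j).
Proof.
move=> hD i j ij.
have hcp := bigdprodWcp hD.
have E : \big[cprod/1]_(i | xpredT i) Di i == (\prod_(i | xpredT i) Di i)%G :> {set gT}.
  rewrite hcp; apply/eqP.
  by rewrite bigprodGE (bigdprodWY hD).
by move/bigcprodYP: E; apply.
Qed.

Lemma sub_of_dprod (gT : finGroupType) (s : nat) (Di : 'I_s -> {group gT}) (D : {group gT}) :
  \big[dprod/1]_(i < s) Di i = D -> forall i, Di i \subset D.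
Proof.
move=> hD i; rewrite -(bigdprodWY hD); apply: sub_gen.
by apply: (bigcup_sup i).
Qed.

Lemma card_fam (s : nat) (T : finType) (S : 'I_s -> {set T}) :
  #|[set f : {ffun 'I_s -> T} | [forall i, f i \in S i]]| = (\prod_(i < s) #|S i|)%N.
Proof.
have -> : #|[set f : {ffun 'I_s -> T} | [forall i, f i \in S i]]| =
          #|(family (fun i => mem (S i)) : pred {ffun 'I_s -> T})|.
  apply: eq_card => f; rewrite inE; apply/forallP/familyP => H i; exact: H.
rewrite card_family foldrE big_map.
by rewrite big_enum.
Qed.


Lemma dih_sq (gT : finGroupType) (Dg Tg : {group gT}) :
  dihedral_with Dg Tg -> forall c, c \in Dg -> c ^+ 2 \in Tg.
Proof.
case=> sTD _ iTD [x /setDP[Dx nTx] [x2 inv]] c Dc.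
case Tc: (c \in Tg); first by rewrite groupX.
have : c \in Tg :* x by rewrite (rcoset_index2 sTD iTD) ?inE ?Tc ?Dx ?nTx.
case/rcosetP=> t Tt ->.
have xV : x^-1 = x by apply/eqP; rewrite eq_invg_mul -x2 expgS expg1.
have : t ^ x = t^-1 := inv t Tt.
rewrite conjgE xV => e.
by rewrite expgS expg1 -!mulgA e mulgV group1.
Qed.

Lemma cyc_sq (gT : finGroupType) (Tg : {group gT}) :
  cyclic Tg -> #|[set c in Tg | c ^+ 2 == 1]| <= 2.
Proof.
move=> cT.
have abT := cyclic_abelian cT.
have gS : group_set [set c in Tg | c ^+ 2 == 1].
  apply/group_setP; split; first by rewrite inE group1 expg1n eqxx.
  move=> a b /setIdP[Ta /eqP a2] /setIdP[Tb /eqP b2].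
  rewrite inE groupM //= expgMn ?a2 ?b2 ?mulg1 //.
  exact: (centsP abT).
have sST : Group gS \subset Tg by apply/subsetP => a /setIdP[].
have /cyclicP[g Eg] := cyclicS sST cT.
have : g \in Group gS by rewrite Eg cycle_id.
rewrite inE => /andP[_ g2].
rewrite (_ : [set c in Tg | c ^+ 2 == 1] = Group gS) // Eg -orderE.
by apply: dvdn_leq => //; rewrite order_dvdn.
Qed.

End Helpers.

Section Abstract.
Set Implicit Arguments. Unset Strict Implicit. Unset Printing Implicit Defensive.
Local Open Scope group_scope.

Variables (gT : finGroupType) (D T L : {group gT}) (s : nat).
Hypotheses (sTD : T \subset D) (abT : abelian T) (nTD : D \subset 'N(T))
 (sqT : forall d, d \in D -> d ^+ 2 \in T) (sLT : L \subset T)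
 (cardD : #|D| <= 2 ^ s * #|T|)
 (cardT2 : #|[set t in T | t ^+ 2 == 1]| <= 2 ^ s).

Lemma comT x y : x \in T -> y \in T -> commute x y.
Proof. by move=> Hx Hy; apply: (centsP abT). Qed.

Lemma conjT t d : t \in T -> d \in D -> t ^ d \in T.
Proof. by move=> Ht Hd; rewrite memJ_norm // (subsetP nTD). Qed.

Lemma conjTT t v : t \in T -> v \in T -> t ^ v = t.
Proof. by move=> Ht Hv; rewrite conjgE (comT Ht Hv) mulKg. Qed.

Lemma commT d e : d \in D -> e \in D -> [~ d, e] \in T.
Proof.
move=> Hd He.
have -> : [~ d, e] = (d ^+ 2)^-1 * (d * e^-1) ^+ 2 * e ^+ 2.
  by rewrite /commg !expgS !expg0 !mulg1 !invMg !mulgA !mulgKV.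
by apply: groupM; [apply: groupM|]; rewrite ?groupV; apply: sqT; rewrite ?groupM ?groupV.
Qed.

Lemma commT1 t d : t \in T -> d \in D -> [~ t, d] \in T.
Proof. by move=> Ht Hd; apply: commT => //; apply: (subsetP sTD). Qed.

Lemma LT x : x \in L -> x \in T.
Proof. exact: (subsetP sLT). Qed.

Definition Wset (H : {set gT}) := [set t in T | [forall g in H, [~ t, g] \in L]].

Lemma Wgroup H : group_set (Wset H).
Proof.
apply/group_setP; split.
  rewrite inE group1; apply/forall_inP => g _; by rewrite comm1g group1.
move=> x y; rewrite !inE => /andP[Tx /forall_inP Wx] /andP[Ty /forall_inP Wy].
rewrite groupM //=; apply/forall_inP => g Hg.
by rewrite commMgJ (conjTT (LT (Wx g Hg)) Ty); apply: groupM; [apply: Wx | apply: Wy].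
Qed.
Canonical W_group H := Group (Wgroup H).

Definition Vset (H : {set gT}) h := [set v in Wset H | v ^ h * v \in L].
Definition W'set (H : {set gT}) h := [set t in Wset H | [~ t, h] \in L].
Definition Rset := [set v in T | v ^+ 2 \in L].
Definition T2 := [set t in T | t ^+ 2 == 1].

Lemma WT H t : t \in Wset H -> t \in T.
Proof. by rewrite inE => /andP[]. Qed.

Lemma Vgroup H h : h \in D -> group_set (Vset H h).
Proof.
move=> Dh; apply/group_setP; split.
  by rewrite inE (group1 (W_group H)) conj1g mulg1 group1.
move=> x y /setIdP[Wx Lx] /setIdP[Wy Ly].
have Tx := WT Wx; have Ty := WT Wy.
rewrite inE (groupM Wx Wy) /=.
have -> : (x * y) ^ h * (x * y) = (x ^ h * x) * (y ^ h * y).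
  have Tb : y ^ h \in T := conjT Ty Dh.
  rewrite conjMg; move: (x ^ h) (y ^ h) Tb => a b Tb.
  by rewrite -!mulgA; congr (a * _); rewrite !mulgA (comT Tb Tx).
exact: groupM.
Qed.

Lemma W'group H h : group_set (W'set H h).
Proof.
apply/group_setP; split.
  by rewrite inE (group1 (W_group H)) comm1g group1.
move=> x y /setIdP[Wx Lx] /setIdP[Wy Ly].
rewrite inE (groupM Wx Wy) /= commMgJ (conjTT (LT Lx) (WT Wy)).
exact: groupM.
Qed.

Lemma keyVW H h : h \in D -> #|Vset H h| * #|W'set H h| <= #|Wset H| * #|Rset|.
Proof.
move=> Dh.
have := mul_cardG (Group (Vgroup H Dh)) (Group (W'group H h)); rewrite /= => ->.
apply: leq_mul; apply: subset_leq_card.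
  apply: (@mul_subG _ (W_group H)); apply/subsetP => x; rewrite inE => /andP[] //.
apply/subsetP => v /setIP[/setIdP[Wv Lv] /setIdP[_ Lc]].
have Tv := WT Wv; rewrite inE Tv /=.
have E : v ^+ 2 = (v ^ h * v) * [~ v, h]^-1.
  rewrite commgEl invMg invgK (comT (conjT Tv Dh) Tv) mulgA mulgK.
  by rewrite expgS expg1.
by rewrite E groupM ?groupV.
Qed.

Lemma Rbound : #|Rset| <= #|L| * #|T2|.
Proof.
rewrite -sum1_card (partition_big (fun v => v ^+ 2) (mem L)) /=; last first.
  by move=> v; rewrite inE => /andP[].
rewrite -sum_nat_const; apply: leq_sum => l Ll.
rewrite sum1dep_card.
case: (pickP [pred v | (v \in Rset) && (v ^+ 2 == l)]) => [v0 /= /andP[Rv0 /eqP v0l]|none]; last first.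
  rewrite (_ : [set x | _] = set0) ?cards0 //; apply/setP => x; rewrite !inE.
  by have := none x; rewrite /= inE.
have Tv0 : v0 \in T by move: Rv0; rewrite inE => /andP[].
rewrite -(card_in_imset (f := fun v => v0^-1 * v)); last by move=> x y _ _; apply: mulgI.
apply: subset_leq_card; apply/subsetP => y /imsetP[x]; rewrite !inE => /andP[/andP[Tx _] /eqP xl] ->.
rewrite groupM ?groupV //= expgMn; last exact: comT (groupVr Tv0) Tx.
by rewrite xl -v0l expVgn mulVg.
Qed.

Definition Sset (H0 : {set gT}) :=
  [set H : {group gT} | [&& H \subset D, H :&: T == L & H0 \subset H]].
Definition Cset (H0 Y : {set gT}) :=
  [set H1 in Sset H0 | [exists h in Y, (h \notin H0) && (H1 :==: <<H0 :|: [set h]>>)]].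

Lemma cosetT Y y1 y2 : Y \in lcosets T D -> y1 \in Y -> y2 \in Y -> y1^-1 * y2 \in T.
Proof.
case/lcosetsP=> y Dy -> /lcosetP[a Ta ->] /lcosetP[b Tb ->].
by rewrite invMg -mulgA mulKg groupM ?groupV.
Qed.

Lemma YD Y y : Y \in lcosets T D -> y \in Y -> y \in D.
Proof.
case/lcosetsP=> x Dx -> /lcosetP[a Ta ->].
by rewrite groupM // (subsetP sTD).
Qed.

Lemma YmulT Y y t : Y \in lcosets T D -> y \in Y -> t \in T -> y * t \in Y.
Proof.
case/lcosetsP=> x Dx -> /lcosetP[a Ta ->] Tt.
by apply/lcosetP; exists (a * t); rewrite ?groupM ?mulgA.
Qed.

Lemma SsetP (H0 : {set gT}) (H : {group gT}) :
  reflect [/\ H \subset D, H :&: T = L & H0 \subset H] (H \in Sset H0).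
Proof.
rewrite inE; apply: (iffP and3P) => [[a /eqP b c]|[a b c]]; first by split.
by split => //; apply/eqP.
Qed.

Lemma CsetP (H0 Y : {set gT}) (H1 : {group gT}) :
  reflect (H1 \in Sset H0 /\ exists2 h, h \in Y &
             (h \notin H0) /\ (H1 :=: <<H0 :|: [set h]>>)) (H1 \in Cset H0 Y).
Proof.
apply: (iffP setIdP) => [[a /existsP[h /and3P[b c /eqP d]]]|[a [h b [c d]]]].
  by split => //; exists h.
by split => //; apply/existsP; exists h; rewrite b c d eqxx.
Qed.

Lemma genC (H0 Y : {set gT}) (H1 : {group gT}) x : L \subset H0 -> Y \in lcosets T D ->
  H1 \in Cset H0 Y -> x \in H1 -> x \in Y -> H1 :=: <<H0 :|: [set x]>>.
Proof.
move=> sLH0 YL /CsetP[/SsetP[sH1D H1T sH0H1] [h Yh [_ E]]] H1x Yx.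
have H1h : h \in H1 by rewrite E mem_gen // !inE eqxx orbT.
apply/eqP; rewrite eqEsubset; apply/andP; split; last first.
  by rewrite gen_subG subUset sH0H1 sub1set.
rewrite {1}E gen_subG subUset sub_gen ?subsetUl //= sub1set.
have Lxh : x^-1 * h \in L by rewrite -H1T inE groupM ?groupV //= (cosetT YL).
have -> : h = x * (x^-1 * h) by rewrite mulKVg.
rewrite groupM // mem_gen //; first by rewrite !inE eqxx orbT.
by rewrite inE (subsetP sLH0).
Qed.

Lemma Wsub (H0 Y : {set gT}) (H1 : {group gT}) h0 : Y \in lcosets T D ->
  H1 \in Cset H0 Y -> h0 \in Y -> Wset H1 \subset W'set H0 h0.
Proof.
move=> YL /CsetP[/SsetP[sH1D H1T sH0H1] [h1 Yh1 [_ E]]] Yh0.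
have H1h1 : h1 \in H1 by rewrite E mem_gen // !inE eqxx orbT.
apply/subsetP => t /setIdP[Tt /forall_inP Wt].
have Wt0 : t \in Wset H0.
  by rewrite inE Tt; apply/forall_inP => g Hg; apply: Wt; apply: (subsetP sH0H1).
rewrite inE Wt0 /=.
have Tv := cosetT YL Yh0 Yh1.
have Dh0 := YD YL Yh0.
have -> : [~ t, h0] = [~ t, h1].
  have -> : h1 = h0 * (h0^-1 * h1) by rewrite mulKVg.
  rewrite commgMJ (conjTT (commT1 Tt Dh0) Tv).
  by have /commgP/eqP -> := comT Tt Tv; rewrite mul1g.
exact: Wt.
Qed.

Lemma inV (H0 Y : {set gT}) (H1 Hs : {group gT}) h0 h' : Y \in lcosets T D ->
  Hs \in Sset H0 -> h0 \in Hs -> h0 \in Y ->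
  H1 \in Sset H0 -> h' \in H1 -> h' \in Y -> h0^-1 * h' \in Vset H0 h0.
Proof.
move=> YL /SsetP[sHsD HsT sH0Hs] Hsh0 Yh0 /SsetP[sH1D H1T sH0H1] H1h' Yh'.
have Tv := cosetT YL Yh0 Yh'.
have Dh0 := YD YL Yh0; have Dh' := YD YL Yh'.
move: (h0^-1 * h') Tv (mulKVg h0 h') => v Tv E.
rewrite -E in H1h' Dh'.
have inL (H : {group gT}) x : H :&: T = L -> x \in H -> x \in T -> x \in L.
  by move=> <- Hx Tx; rewrite inE Hx.
rewrite !inE Tv /=; apply/andP; split.
  apply/forall_inP => g H0g.
  have Dg : g \in D by apply: (subsetP sHsD); apply: (subsetP sH0Hs).
  have c0 : [~ h0, g] \in L.
    by apply: (inL Hs) => //; [apply: groupR => //; apply: (subsetP sH0Hs) | apply: commT].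
  have c1 : [~ h0 * v, g] \in L.
    apply: (inL H1) => //; last by apply: commT.
    by apply: groupR => //; apply: (subsetP sH0H1).
  rewrite commMgJ (conjTT (LT c0) Tv) in c1.
  have -> : [~ v, g] = [~ h0, g]^-1 * ([~ h0, g] * [~ v, g]) by rewrite mulKg.
  by rewrite groupM ?groupV.
have s0 : h0 ^+ 2 \in L by apply: (inL Hs) => //; [apply: groupX | apply: sqT].
have s1 : (h0 * v) ^+ 2 \in L by apply: (inL H1) => //; [apply: groupX | apply: sqT].
have -> : v ^ h0 * v = (h0 ^+ 2)^-1 * (h0 * v) ^+ 2.
  by rewrite !expgS !expg0 !mulg1 conjgE invMg !mulgA mulgKV.
by apply: groupM; rewrite ?groupV.
Qed.

Lemma Cinj (H0 Y : {set gT}) (Hs : {group gT}) h0 : L \subset H0 -> Y \in lcosets T D ->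
  Hs \in Cset H0 Y -> h0 \in Hs -> h0 \in Y -> #|Cset H0 Y| * #|L| <= #|Vset H0 h0|.
Proof.
move=> sLH0 YL Cs Hsh0 Yh0.
have CS : Hs \in Sset H0 by case/CsetP: Cs.
pose f := fun p : {group gT} * gT => h0^-1 * (repr (p.1 :&: Y) * p.2).
have reprP (H1 : {group gT}) : H1 \in Cset H0 Y -> repr (H1 :&: Y) \in H1 :&: Y.
  case/CsetP=> _ [h Yh [_ E]]; apply: (mem_repr h).
  by rewrite inE Yh andbT E mem_gen // !inE eqxx orbT.
have elP (H1 : {group gT}) l : H1 \in Cset H0 Y -> l \in L -> repr (H1 :&: Y) * l \in H1 :&: Y.
  move=> C1 Ll; have /setIP[a b] := reprP H1 C1; rewrite inE (YmulT YL b (LT Ll)) andbT.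
  case/CsetP: C1 => /SsetP[_ _ sH0H1] _.
  by rewrite groupM // (subsetP sH0H1) // (subsetP sLH0).
rewrite -cardsX -(card_in_imset (f := f)).
  apply: subset_leq_card; apply/subsetP => y /imsetP[[H1 l]] /setXP[C1 Ll] ->.
  have /setIP[a b] := elP H1 l C1 Ll.
  have S1 : H1 \in Sset H0 by case/CsetP: C1.
  exact: (inV YL CS Hsh0 Yh0 S1 a b).
move=> [H1 l] [H2 l'] /setXP[C1 Ll] /setXP[C2 Ll']; rewrite /f /= => /mulgI E.
have /setIP[a b] := elP H1 l C1 Ll.
have /setIP[a2 b2] := elP H2 l' C2 Ll'.
rewrite -E in a2 b2.
have E12 : H1 = H2.
  by apply: val_inj => /=; rewrite (genC sLH0 YL C1 a b) (genC sLH0 YL C2 a2 b2).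
by move: E; rewrite E12 => /mulgI ->.
Qed.

Lemma Cbound (H0 Y : {set gT}) : L \subset H0 -> Y \in lcosets T D ->
  \sum_(H1 in Cset H0 Y) #|Wset H1| <= 2 ^ s * #|Wset H0|.
Proof.
move=> sLH0 YL.
case: (pickP (mem (Cset H0 Y))) => [Hs Cs | none]; last first.
  by rewrite big_pred0.
have [_ [h0 Yh0 [_ E]]] := CsetP _ _ _ Cs.
have Hsh0 : h0 \in Hs by rewrite E mem_gen // !inE eqxx orbT.
have Dh0 := YD YL Yh0.
apply: (@leq_trans (#|Cset H0 Y| * #|W'set H0 h0|)).
  rewrite -sum_nat_const; apply: leq_sum => H1 C1.
  exact: subset_leq_card (Wsub YL C1 Yh0).
have L0 : 0 < #|L| := cardG_gt0 L.
rewrite -(leq_pmul2r L0) mulnAC.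
apply: (leq_trans (leq_mul (Cinj sLH0 YL Cs Hsh0 Yh0) (leqnn _))).
apply: (leq_trans (keyVW H0 Dh0)).
rewrite (mulnC (2 ^ s)%N) -mulnA leq_mul2l; apply/orP; right.
by rewrite mulnC; apply: (leq_trans Rbound); rewrite leq_mul2l cardT2 orbT.
Qed.

Lemma countS k : forall H0 : {group gT}, H0 \subset D -> H0 :&: T = L ->
  #|D| * #|L| <= 2 ^ k * (#|H0| * #|T|) ->
  #|Sset H0| <= #|Wset H0| * (2 ^ (2 * s + 1)) ^ k.
Proof.
have T0 : 0 < #|T| := cardG_gt0 T.
have W0 H : 0 < #|Wset H| := cardG_gt0 (W_group H).
elim: k => [|k IH] H0 sH0D H0T hk.
  have sub : Sset H0 \subset [set H0].
    apply/subsetP => H /SsetP[sHD HT sH0H]; rewrite inE; apply/eqP; apply: val_inj.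
    apply/eqP; rewrite eq_sym eqEcard sH0H /=.
    rewrite -(leq_pmul2r T0) (mul_cardG H T) HT.
    rewrite expn0 mul1n in hk; apply: (leq_trans _ hk); rewrite leq_mul2r; apply/orP; right.
    by apply: subset_leq_card; apply: mul_subG.
  by rewrite expn0 muln1; apply: (leq_trans (subset_leq_card sub)); rewrite cards1.
have sLH0 : L \subset H0 by rewrite -H0T subsetIl.
have cover : Sset H0 \subset
    [set H0] :|: \bigcup_(Y in lcosets T D) \bigcup_(H1 in Cset H0 Y) Sset H1.
  apply/subsetP => H SH; have [sHD HT sH0H] := SsetP _ _ SH.
  rewrite !inE; case: (eqVneq H H0) => [-> //|neq]; rewrite orFb.
  have [h Hh nh] : exists2 h, h \in H & h \notin H0.
    apply/subsetPn; apply/negP => sub.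
    by move/eqP: neq; apply; apply: val_inj; apply/eqP; rewrite eqEsubset sH0H andbT.
  have Dh : h \in D := subsetP sHD h Hh.
  apply/bigcupP; exists (h *: T); first by apply/lcosetsP; exists h.
  apply/bigcupP; exists <<H0 :|: [set h]>>%G.
    apply/CsetP; split; last by exists h; rewrite ?lcoset_refl.
    apply/SsetP; split.
    - by rewrite gen_subG subUset sH0D sub1set.
    - apply/eqP; rewrite eqEsubset; apply/andP; split.
        rewrite -HT setSI // gen_subG subUset sH0H sub1set //.
      by rewrite subsetI (subset_trans sLH0 (sub_gen (subsetUl _ _))) sLT.
    - exact: sub_gen (subsetUl _ _).
  apply/SsetP; split => //.
  by rewrite gen_subG subUset sH0H sub1set.
apply: (leq_trans (subset_leq_card cover)); apply: (leq_trans (leq_card_setU _ _)).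
rewrite cards1.
pose Q := (2 ^ (2 * s + 1))%N.
apply: (@leq_trans (1 + \sum_(Y in lcosets T D) \sum_(H1 in Cset H0 Y) #|Wset H1| * Q ^ k)).
  rewrite leq_add2l; apply: (leq_trans (card_bigcup_le _ _)); apply: leq_sum => Y YL.
  apply: (leq_trans (card_bigcup_le _ _)); apply: leq_sum => H1 C1.
  have [/SsetP[sH1D H1T sH0H1] [h Yh [nh E]]] := CsetP _ _ _ C1.
  apply: IH => //.
  have prop : H0 \proper H1.
    by apply/properP; split => //; exists h => //; rewrite E mem_gen // !inE eqxx orbT.
  have := dvd_lt2 (cardSg sH0H1) (proper_card prop).
  move: hk; rewrite expnS; move: (#|D| * #|L|)%N (2 ^ k)%N => a b ha hb.
  apply: (leq_trans ha).
  have -> : (2 * b * (#|H0| * #|T|) = b * (2 * #|H0| * #|T|))%N by rewrite !mulnA (mulnC 2 b).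
  by rewrite leq_mul2l leq_mul2r hb !orbT.
apply: (@leq_trans (1 + \sum_(Y in lcosets T D) (2 ^ s * (#|Wset H0| * Q ^ k)))).
  rewrite leq_add2l; apply: leq_sum => Y YL.
  rewrite -big_distrl /= mulnA leq_mul2r; apply/orP; right.
  exact: Cbound.
rewrite sum_nat_const.
have cL : #|lcosets T D| <= 2 ^ s.
  rewrite card_lcosets -(leq_pmul2l T0) (Lagrange sTD) mulnC; exact: cardD.
have -> : ((2 ^ (2 * s + 1)) ^ k.+1 = Q ^ k * (2 * (2 ^ s * 2 ^ s)))%N.
  have e : (2 ^ (2 * s + 1) = 2 * (2 ^ s * 2 ^ s))%N.
    by rewrite -expnD addnn -mul2n addn1 expnS.
  by rewrite expnS mulnC /Q e.
by apply: arith => //; rewrite /Q ?expn_gt0.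
Qed.

Lemma abstract_main :
  #|[set H : {group gT} | (H \subset D) && (H :&: T == L)]| <= #|T| * 2 ^ ((2 * s + 1) * s).
Proof.
have -> : [set H : {group gT} | (H \subset D) && (H :&: T == L)] = Sset L.
  apply/setP => H; rewrite !inE; apply/andP/and3P => [[a b]|[a b c]]; last by split.
  by split => //; move/eqP: b => <-; exact: subsetIl.
have sLD : L \subset D := subset_trans sLT sTD.
apply: (leq_trans (countS (k:=s) sLD (setIidPl sLT) _)).
  by rewrite [(#|L| * _)%N]mulnC mulnA leq_mul2r cardD orbT.
rewrite expnM; apply: leq_mul => //.
by apply: subset_leq_card; apply/subsetP => t /setIdP[].
Qed.

End Abstract.

Section Concrete.
Set Implicit Arguments. Unset Strict Implicit. Unset Printing Implicit Defensive.
Local Open Scope group_scope.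

Variables (gT : finGroupType) (s : nat) (Di Ti : 'I_s -> {group gT}) (D T : {group gT}).
Hypotheses (hdih : forall i, dihedral_with (Di i) (Ti i))
  (hD : \big[dprod/1]_(i < s) Di i = D)
  (hT : T = \prod_(i < s) Ti i :> {set gT}).

Lemma sTiDi i : Ti i \subset Di i.
Proof. by case: (hdih i). Qed.

Lemma cycTi i : cyclic (Ti i).
Proof. by case: (hdih i). Qed.

Lemma iTi i : #|Di i : Ti i| = 2.
Proof. by case: (hdih i). Qed.

Lemma centD i j : i != j -> Di i \subset 'C(Di j).
Proof. move=> ij; exact: (cent_of_dprod hD ij). Qed.

Lemma centT i j : Ti i \subset 'C(Ti j).
Proof.
case: (eqVneq i j) => [<-|ij]; first exact: cyclic_abelian (cycTi i).
apply: (subset_trans (sTiDi i)); apply: (subset_trans (centD ij)).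
exact: centS (sTiDi j).
Qed.

Lemma sTD : T \subset D.
Proof.
rewrite hT; apply: prod_subG => i _.
exact: subset_trans (sTiDi i) (sub_of_dprod hD i).
Qed.

Lemma abT : abelian T.
Proof.
have sTG : T \subset <<\bigcup_(i < s) Ti i>>.
  rewrite hT; apply: prod_subG => i _; apply: sub_gen; exact: (bigcup_sup i).
apply: (abelianS sTG).
rewrite /abelian gen_subG; apply/bigcupsP => i _.
rewrite centsC gen_subG; apply/bigcupsP => j _.
exact: centT.
Qed.

Lemma nTD : D \subset 'N(T).
Proof.
rewrite hT; elim/big_ind: _ => [|A B nA nB|i _]; first exact: norms1.
  exact: normsM.
rewrite -(bigdprodWY hD) gen_subG; apply/bigcupsP => j _.
case: (eqVneq j i) => [->|ji].
  exact: normal_norm (index2_normal (sTiDi i) (iTi i)).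
apply: (subset_trans (centD ji)); apply: (subset_trans (centS (sTiDi i))).
exact: cent_sub.
Qed.

Lemma commc (c : 'I_s -> gT) : (forall i, c i \in Di i) -> forall i j, commute (c i) (c j).
Proof.
move=> Hc i j; case: (eqVneq i j) => [->|ij]; first exact: commute_refl.
exact: (centsP (centD ij)).
Qed.

Lemma sqT d : d \in D -> d ^+ 2 \in T.
Proof.
move=> Dd; have [c [Hc -> _]] := mem_bigdprod hD Dd.
rewrite expgS expg1 -prodgM_commute; last by move=> i j _ _; apply: commc => k; apply: Hc.
rewrite hT; apply: mem_prodg => i _.
by apply: (dih_sq (hdih i)); rewrite -?expgS; apply: Hc.
Qed.

Lemma cardD_eq : #|D| = (2 ^ s * \prod_(i < s) #|Ti i|)%N.
Proof.
rewrite -(bigdprod_card hD).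
rewrite (eq_bigr (fun i => 2 * #|Ti i|)%N) => [|i _]; last first.
  by rewrite -(Lagrange (sTiDi i)) iTi mulnC.
by rewrite big_split /= prod_nat_const card_ord.
Qed.

Lemma prodT_le : (\prod_(i < s) #|Ti i| <= #|T|)%N.
Proof.
rewrite -card_fam -(card_in_imset (f := fun f : {ffun 'I_s -> gT} => \prod_(i < s) f i)).
  apply: subset_leq_card; apply/subsetP => x /imsetP[f]; rewrite inE => /forallP Hf ->.
  by rewrite hT; apply: mem_prodg => i _; exact: Hf.
move=> f g; rewrite !inE => /forallP Hf /forallP Hg E; apply/ffunP => i.
have Dx : \prod_(i < s) f i \in D.
  rewrite -(bigdprodW hD); apply: mem_prodg => k _.
  by apply: (subsetP (sTiDi k)); apply: Hf.
have [c [_ _ U]] := mem_bigdprod hD Dx.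
have -> : f i = c i.
  by apply: (U f) => // k _; apply: (subsetP (sTiDi k)); apply: Hf.
apply/esym; apply: (U g) => // k _; apply: (subsetP (sTiDi k)); apply: Hg.
Qed.

Lemma T2_le : #|[set t in T | t ^+ 2 == 1]| <= 2 ^ s.
Proof.
pose S i := [set c in Ti i | c ^+ 2 == 1].
pose F := [set f : {ffun 'I_s -> gT} | [forall i, f i \in S i]].
pose g := fun f : {ffun 'I_s -> gT} => \prod_(i < s) f i.
apply: (@leq_trans #|g @: F|).
  apply: subset_leq_card; apply/subsetP => t /setIdP[Tt /eqP t2].
  move: Tt; rewrite hT => /prodsgP[c Hc tE].
  have Hc' : forall i, c i \in Di i.
    by move=> i; apply: (subsetP (sTiDi i)); apply: Hc.
  have sq1 : forall i, c i ^+ 2 = 1.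
    have [c0 [_ _ U]] := mem_bigdprod hD (group1 D).
    have ep : \prod_(k < s) c k ^+ 2 = t ^+ 2.
      rewrite tE expgS expg1 -prodgM_commute; last by move=> *; apply: commc.
      by apply: eq_bigr => k _; rewrite expgS expg1.
    move=> i.
    have e1 : c i ^+ 2 = c0 i.
      apply: (U (fun k => c k ^+ 2)) => // [k _|]; first by rewrite groupX.
      by rewrite ep t2.
    have e2 : 1 = c0 i.
      by apply: (U (fun _ => 1)) => //; rewrite big1.
    by rewrite e1 -e2.
  apply/imsetP; exists [ffun i => c i].
    by rewrite inE; apply/forallP => i; rewrite ffunE inE Hc //= sq1 eqxx.
  by rewrite tE; apply: eq_bigr => i _; rewrite ffunE.
apply: (leq_trans (leq_imset_card _ _)); rewrite card_fam.
apply: (@leq_trans (\prod_(i < s) 2)%N).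
  by apply: leq_prod => i _; exact: cyc_sq (cycTi i).
by rewrite prod_nat_const card_ord.
Qed.

End Concrete.

Theorem proposition5p6 (gT : finGroupType) (s : nat)
    (Di Ti : 'I_s -> {group gT}) (D T L : {group gT})
    (hdih : forall i, dihedral_with (Di i) (Ti i))
    (hD : \big[dprod/1]_(i < s) Di i = D)
    (hT : T = \prod_(i < s) Ti i :> {set gT})
    (hL : L \subset T) :
  #|[set H : {group gT} | (H \subset D) && (H :&: T == L)]|
    <= #|D| ^ 8 * 2 ^ (2 * s ^ 2).
Proof.
have sTD0 := sTD hdih hD hT.
have abT0 := abT hdih hD hT.
have nTD0 := nTD hdih hD hT.
have sqT0 := sqT hdih hD hT.
have cD := cardD_eq hdih hD.
have pT := prodT_le hdih hD hT.
have T2 := T2_le hdih hD hT.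
have cardD : #|D| <= 2 ^ s * #|T| by rewrite cD leq_mul2l pT orbT.
have M := abstract_main sTD0 abT0 nTD0 sqT0 hL cardD T2.
apply: (leq_trans M).
have xd : #|T| <= #|D| := subset_leq_card sTD0.
have D0 : 0 < #|D| := cardG_gt0 D.
have ad : 2 ^ s <= #|D|.
  move: D0; rewrite cD; move: (\prod_(i < s) #|Ti i|)%N => P.
  by case: P => [|P]; rewrite ?muln0 // => _; rewrite leq_pmulr.
have -> : ((2 * s + 1) * s = s + 2 * s ^ 2)%N by rewrite mulnDl mul1n addnC -mulnA.
rewrite expnD mulnA leq_mul2r; apply/orP; right.
apply: (@leq_trans (#|D| ^ 2)%N).
  by rewrite expnS expn1; apply: leq_mul.
by apply: leq_pexp2l.
Qed.
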